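(* Consider the single-hop VAoI system described in the context with maximum average update rate $\alpha\in(0,1]$. The threshold-based policy minimizing the average VAoI subject to the rate constraint $\lim_{T\to\infty}\frac1T\mathbb{E}\big[\sum_{t=0}^{T-1}a(t)\big]\le\alpha$ is a randomized mixture of the two threshold policies with thresholds $\Delta_T^\ast$ and $\Delta_T^\ast-1$, applied with probabilities $\gamma$ and $1-\gamma$ respectively, where \[ \Delta_T^\ast=\left\lceil \frac{p_g}{p_s}\Big(\frac1\alpha-1+p_s\Big)\right\rceil,\qquad \gamma=\frac{R(\Delta_T^\ast-1)-\alpha}{R(\Delta_T^\ast-1)-R(\Delta_T^\ast)}, \] with $R(\Delta_T)=\dfrac{p_g}{(\Delta_T-1)p_s+\beta}$ for $\Delta_T\ge1$, $R(0)=1$, and $\beta=1-(1-p_s)(1-p_g)$.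
   Context: Time is slotted, $t\in\{0,1,2,\dots\}$. An information source generates a new version in each slot independently with probability $p_g$; let $G_t\in\{0,1\}$ indicate whether a new version is generated in slot $t$. A transmitter holding the current source version may, in each slot $t$, attempt to send it to a receiver over an erasure channel; $a(t)\in\{0,1\}$ indicates an attempt, and each attempt succeeds independently with probability $p_s$. The Version Age of Information (VAoI) $\Delta(t)$ evolves as $\Delta(t+1)=G_t$ if $a(t)=1$ and the attempt succeeds, and $\Delta(t+1)=\Delta(t)+G_t$ otherwise. All version-generation and channel events are mutually independent. Assume $0<p_s<1$, $0<p_g<1$. The average VAoI of a policy is $\lim_{T\to\infty}\frac1T\mathbb{E}[\sum_{t=0}^{T-1}\Delta(t)]$. A threshold policy with threshold $\Delta_T\in\{0,1,2,\dots\}$ sets $a(t)=1$ iff $\Delta(t)\ge\Delta_T$; its long-run transmission rate is $R(\Delta_T)$, the stationary probability that $\Delta\ge\Delta_T$. A randomized mixture of threshold policies with thresholds $\Delta_T^\ast$ and $\Delta_T^\ast-1$ with probabilities $\gamma$ and $1-\gamma$ is a policy whose average transmission rate is $\gamma R(\Delta_T^\ast)+(1-\gamma)R(\Delta_T^\ast-1)$ and whose average VAoI is $\gamma\bar\Delta_{(\Delta_T^\ast)}+(1-\gamma)\bar\Delta_{(\Delta_T^\ast-1)}$, where $\bar\Delta_{(\Delta_T)}$ denotes the average VAoI of the threshold policy with threshold $\Delta_T$. *)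

(* Defs.v *)
From Stdlib Require Import Reals Lra.
From Coquelicot Require Import Coquelicot.
Open Scope R_scope.

(* Transition probability P(Delta(t+1) = k | Delta(t) = j) of the VAoI chain
   under the threshold policy with threshold d (transmit iff Delta >= d). *)
Definition trans (ps pg : R) (d j k : nat) : R :=
  let inc (i : nat) := (if Nat.eqb k i then 1 - pg else 0)
                     + (if Nat.eqb k (S i) then pg else 0) in
  if Nat.ltb j d then inc j
  else ps * inc 0%nat + (1 - ps) * inc j.

(* dist ps pg d x0 t k = P(Delta(t) = k), starting from Delta(0) = x0.
   Delta(t) <= x0 + t, so the support of dist t is {0,...,x0+t}. *)
Fixpoint dist (ps pg : R) (d x0 : nat) (t : nat) (k : nat) : R :=
  match t with
  | O => if Nat.eqb k x0 then 1 else 0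
  | S t' => sum_f_R0 (fun j => dist ps pg d x0 t' j * trans ps pg d j k) (x0 + t')
  end.

Definition expAoI (ps pg : R) (d x0 t : nat) : R :=
  sum_f_R0 (fun k => INR k * dist ps pg d x0 t k) (x0 + t).

(* E[a(t)] = P(Delta(t) >= d) *)
Definition expAct (ps pg : R) (d x0 t : nat) : R :=
  sum_f_R0 (fun k => if Nat.leb d k then dist ps pg d x0 t k else 0) (x0 + t).

(* Cesaro averages (1/T) sum_{t=0}^{T-1} f t, indexed by n = T - 1. *)
Definition cesaro (f : nat -> R) (n : nat) : R := sum_f_R0 f n / INR (S n).

Definition Rceil (x : R) : Z := (- (up (- x) - 1))%Z.

(* Main.v *)
Require Import Defs.
Require Import Defs.
From Stdlib Require Import Reals Lra Lia ZArith.
From Coquelicot Require Import Coquelicot.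
Require Import Defs.
Open Scope R_scope.

Lemma delta_sum a i g M :
  sum_f_R0 (fun k => (if Nat.eqb k i then a else 0) * g k) M =
  if Nat.leb i M then a * g i else 0.
Proof.
  induction M as [|M IH].
  - simpl. destruct i; simpl; ring.
  - rewrite tech5, IH.
    destruct (Nat.eqb (S M) i) eqn:E1.
    + apply Nat.eqb_eq in E1. subst i.
      replace (Nat.leb (S M) M) with false by (symmetry; apply Nat.leb_gt; lia).
      rewrite Nat.leb_refl. ring.
    + apply Nat.eqb_neq in E1.
      destruct (Nat.leb i M) eqn:E2.
      * apply Nat.leb_le in E2.
        replace (Nat.leb i (S M)) with true by (symmetry; apply Nat.leb_le; lia). ring.
      * apply Nat.leb_gt in E2.
        replace (Nat.leb i (S M)) with false by (symmetry; apply Nat.leb_gt; lia). ring.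
Qed.

Lemma sum_swap (a : nat -> nat -> R) M N :
  sum_f_R0 (fun k => sum_f_R0 (fun j => a j k) N) M =
  sum_f_R0 (fun j => sum_f_R0 (fun k => a j k) M) N.
Proof.
  induction M as [|M IH].
  - simpl. reflexivity.
  - rewrite tech5, IH, <- sum_plus. apply sum_eq. intros. rewrite tech5. reflexivity.
Qed.

Definition Pg (ps pg : R) (d : nat) (g : nat -> R) (j : nat) : R :=
  if Nat.ltb j d then (1 - pg) * g j + pg * g (S j)
  else ps * ((1 - pg) * g 0%nat + pg * g 1%nat) + (1 - ps) * ((1 - pg) * g j + pg * g (S j)).

Definition E ps pg d x0 t (g : nat -> R) :=
  sum_f_R0 (fun k => dist ps pg d x0 t k * g k) (x0 + t).

Lemma inc_sum i a b g M : (S i <= M)%nat ->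
  sum_f_R0 (fun k => ((if Nat.eqb k i then a else 0) + (if Nat.eqb k (S i) then b else 0)) * g k) M
  = a * g i + b * g (S i).
Proof.
  intros H.
  rewrite (sum_eq _ (fun k => (if Nat.eqb k i then a else 0) * g k + (if Nat.eqb k (S i) then b else 0) * g k))
    by (intros; ring).
  rewrite sum_plus, !delta_sum.
  replace (Nat.leb i M) with true by (symmetry; apply Nat.leb_le; lia).
  replace (Nat.leb (S i) M) with true by (symmetry; apply Nat.leb_le; lia).
  reflexivity.
Qed.

Lemma trans_sum ps pg d g j M : (S j <= M)%nat ->
  sum_f_R0 (fun k => trans ps pg d j k * g k) M = Pg ps pg d g j.
Proof.
  intros H. unfold trans, Pg. cbv zeta.
  destruct (Nat.ltb j d).
  - apply inc_sum; auto.
  - set (i0 := fun k : nat => (if Nat.eqb k 0 then 1 - pg else 0) + (if Nat.eqb k 1 then pg else 0)).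
    set (ij := fun k : nat => (if Nat.eqb k j then 1 - pg else 0) + (if Nat.eqb k (S j) then pg else 0)).
    rewrite (sum_eq _ (fun k => ps * (i0 k * g k) + (1 - ps) * (ij k * g k))) by (intros; unfold i0, ij; ring).
    rewrite sum_plus.
    rewrite (sum_eq (fun k => ps * (i0 k * g k)) (fun k => i0 k * g k * ps)) by (intros; ring).
    rewrite (sum_eq (fun k => (1 - ps) * (ij k * g k)) (fun k => ij k * g k * (1 - ps))) by (intros; ring).
    rewrite <- !scal_sum. unfold i0, ij.
    rewrite (inc_sum 0), (inc_sum j) by lia. ring.
Qed.

Lemma E_step ps pg d x0 t g :
  E ps pg d x0 (S t) g = E ps pg d x0 t (Pg ps pg d g).
Proof.
  unfold E. rewrite Nat.add_succ_r. simpl dist.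
  rewrite (sum_eq _ (fun k => sum_f_R0 (fun j => dist ps pg d x0 t j * trans ps pg d j k * g k) (x0 + t))).
  2:{ intros. rewrite Rmult_comm, scal_sum. apply sum_eq. intros; ring. }
  rewrite (sum_swap (fun j k => dist ps pg d x0 t j * trans ps pg d j k * g k)).
  apply sum_eq. intros j Hj.
  rewrite <- trans_sum with (M := S (x0 + t)) by lia.
  rewrite scal_sum. apply sum_eq. intros; ring.
Qed.

Lemma E_ext ps pg d x0 t g h : (forall k, g k = h k) ->
  E ps pg d x0 t g = E ps pg d x0 t h.
Proof. intros H. unfold E. apply sum_eq. intros. rewrite H. reflexivity. Qed.

Lemma E_lin ps pg d x0 t g h a b :
  E ps pg d x0 t (fun k => a * g k + b * h k) = a * E ps pg d x0 t g + b * E ps pg d x0 t h.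
Proof.
  unfold E. rewrite (sum_eq _ (fun k => dist ps pg d x0 t k * g k * a + dist ps pg d x0 t k * h k * b))
    by (intros; ring).
  rewrite sum_plus, <- !scal_sum. ring.
Qed.

Lemma E_0 ps pg d x0 g : E ps pg d x0 0 g = g x0.
Proof.
  unfold E. simpl dist. rewrite Nat.add_0_r, delta_sum, Nat.leb_refl. ring.
Qed.

Lemma trans_nonneg ps pg d j k : 0 <= ps <= 1 -> 0 <= pg <= 1 -> 0 <= trans ps pg d j k.
Proof.
  intros Hs Hg. unfold trans.
  assert (Hi : forall i, 0 <= (if Nat.eqb k i then 1 - pg else 0) + (if Nat.eqb k (S i) then pg else 0)).
  { intros i. destruct (Nat.eqb k i), (Nat.eqb k (S i)); lra. }
  destruct (Nat.ltb j d). apply Hi.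
  pose proof (Hi 0%nat). pose proof (Hi j).
  apply Rplus_le_le_0_compat; apply Rmult_le_pos; lra.
Qed.

Lemma dist_nonneg ps pg d x0 t k : 0 <= ps <= 1 -> 0 <= pg <= 1 -> 0 <= dist ps pg d x0 t k.
Proof.
  intros Hs Hg. revert k. induction t as [|t IH]; intros k; simpl.
  - destruct (Nat.eqb k x0); lra.
  - apply cond_pos_sum. intros j. apply Rmult_le_pos; auto. apply trans_nonneg; auto.
Qed.

Lemma E_mono ps pg d x0 t g h : 0 <= ps <= 1 -> 0 <= pg <= 1 -> (forall k, g k <= h k) ->
  E ps pg d x0 t g <= E ps pg d x0 t h.
Proof.
  intros Hs Hg H. unfold E. apply sum_Rle. intros. apply Rmult_le_compat_l; auto.
  apply dist_nonneg; auto.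
Qed.

Lemma E_mass ps pg d x0 t : E ps pg d x0 t (fun _ => 1) = 1.
Proof.
  induction t as [|t IH].
  - apply E_0.
  - rewrite E_step. transitivity (E ps pg d x0 t (fun _ => 1)); [|exact IH]. apply E_ext. intros k. unfold Pg.
    destruct (Nat.ltb k d); ring.
Qed.

Lemma lim_inv_S : is_lim_seq (fun n => / INR (S n)) 0.
Proof.
  apply (is_lim_seq_incr_1 (fun n => / INR n) 0).
  replace (Finite 0) with (Rbar_inv p_infty) by reflexivity.
  apply is_lim_seq_inv. apply is_lim_seq_INR. discriminate.
Qed.

Lemma lim_aux c a : is_lim_seq (fun n => c + a * / INR (S n)) c.
Proof.
  pose proof (is_lim_seq_scal_l _ a _ lim_inv_S) as H. simpl in H.
  pose proof (is_lim_seq_plus' _ _ c (a * 0) (is_lim_seq_const c) H) as H2.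
  replace (c + a * 0) with c in H2 by ring. exact H2.
Qed.

Lemma poisson ps pg d x0 f h c M :
  (forall j, f j + Pg ps pg d h j - h j = c) ->
  (forall t, Rabs (E ps pg d x0 t h) <= M) ->
  is_lim_seq (cesaro (fun t => E ps pg d x0 t f)) c.
Proof.
  intros HP HM.
  assert (Hs : forall t, E ps pg d x0 t f = c - E ps pg d x0 (S t) h + E ps pg d x0 t h).
  { intros t. rewrite E_step.
    rewrite (E_ext _ _ _ _ _ f (fun k => c * (fun _ => 1) k + 1 * (fun k => (-1) * Pg ps pg d h k + 1 * h k) k)).
    2:{ intros k. rewrite <- (HP k). ring. }
    rewrite E_lin, E_lin, E_mass. ring. }
  assert (Hsum : forall n, sum_f_R0 (fun t => E ps pg d x0 t f) n =
     INR (S n) * c - E ps pg d x0 (S n) h + E ps pg d x0 0 h).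
  { induction n as [|n IH].
    - simpl. rewrite Hs. ring.
    - rewrite tech5, IH, Hs, (S_INR (S n)). ring. }
  assert (HM0 : 0 <= M) by (apply Rle_trans with (2 := HM 0%nat); apply Rabs_pos).
  apply is_lim_seq_le_le with (u := fun n => c + (- (2 * M)) * / INR (S n)) (w := fun n => c + 2 * M * / INR (S n)).
  - intros n. unfold cesaro. rewrite Hsum.
    pose proof (HM 0%nat) as H0. pose proof (HM (S n)) as H1.
    apply Rabs_le_between in H0. apply Rabs_le_between in H1.
    assert (Hn : 0 < INR (S n)) by (apply lt_0_INR; lia).
    set (a := E ps pg d x0 0 h) in *. set (b := E ps pg d x0 (S n) h) in *.
    replace ((INR (S n) * c - b + a) / INR (S n)) with (c + (a - b) * / INR (S n)) by (field; lra).
    assert (Hi : 0 < / INR (S n)) by (apply Rinv_0_lt_compat; lra).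
    split; nra.
  - apply lim_aux.
  - apply lim_aux.
Qed.

Lemma E_const ps pg d x0 t B : E ps pg d x0 t (fun _ => B) = B.
Proof.
  rewrite (E_ext _ _ _ _ _ _ (fun k => B * (fun _ => 1) k + 0 * (fun _ => 1) k)) by (intros; ring).
  rewrite E_lin, E_mass. ring.
Qed.

Lemma E_bound ps pg d x0 t h B : 0 <= ps <= 1 -> 0 <= pg <= 1 ->
  (forall k, Rabs (h k) <= B) -> Rabs (E ps pg d x0 t h) <= B.
Proof.
  intros Hs Hg H. apply Rabs_le.
  split.
  - rewrite <- (E_const ps pg d x0 t (- B)). apply E_mono; auto.
    intros k. specialize (H k). apply Rabs_le_between in H. lra.
  - rewrite <- (E_const ps pg d x0 t B). apply E_mono; auto.
    intros k. specialize (H k). apply Rabs_le_between in H. lra.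
Qed.

Definition Rfun (ps pg : R) (d : nat) : R :=
  match d with O => 1 | S _ => pg / ((INR d - 1) * ps + (1 - (1 - ps) * (1 - pg))) end.

Lemma rate_lim ps pg x0 d : 0 < ps < 1 -> 0 < pg < 1 ->
  is_lim_seq (cesaro (expAct ps pg d x0)) (Rfun ps pg d).
Proof.
  intros Hs Hg.
  apply is_lim_seq_ext with (u := cesaro (fun t => E ps pg d x0 t (fun k => if Nat.leb d k then 1 else 0))).
  { intros n. unfold cesaro. f_equal. apply sum_eq. intros t _. unfold E, expAct.
    apply sum_eq. intros k _. destruct (Nat.leb d k); ring. }
  destruct d as [|n].
  - apply (poisson _ _ _ _ _ (fun _ => 0) _ 0).
    + intros j. unfold Pg. destruct (Nat.ltb j 0); simpl; ring.
    + intros t. rewrite E_const, Rabs_R0. lra.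
  - set (d := S n).
    set (c := Rfun ps pg d).
    assert (HD : 0 < (INR d - 1) * ps + (1 - (1 - ps) * (1 - pg))).
    { unfold d. rewrite S_INR. pose proof (pos_INR n). nra. }
    apply (poisson _ _ _ _ _ (fun k => c / pg * INR (Nat.min k d)) _ (c / pg * INR d)).
    + intros j. unfold Pg.
      destruct (Nat.ltb_spec j d) as [Hj|Hj].
      * replace (Nat.leb d j) with false by (symmetry; apply Nat.leb_gt; lia).
        rewrite (Nat.min_l j d) by lia. rewrite (Nat.min_l (S j) d) by lia.
        rewrite S_INR. field. lra.
      * replace (Nat.leb d j) with true by (symmetry; apply Nat.leb_le; lia).
        rewrite (Nat.min_r j d) by lia. rewrite (Nat.min_r (S j) d) by lia.
        rewrite (Nat.min_l 0 d) by lia. rewrite (Nat.min_l 1 d) by (unfold d; lia).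
        assert (Hc : c = pg / ((INR d - 1) * ps + (1 - (1 - ps) * (1 - pg)))) by reflexivity.
        rewrite Hc. simpl (INR 0). simpl (INR 1). field. split; lra.
    + intros t. apply E_bound; try lra.
      assert (Hc : c = pg / ((INR d - 1) * ps + (1 - (1 - ps) * (1 - pg)))) by reflexivity.
      assert (Hc0 : 0 < c) by (rewrite Hc; apply Rdiv_lt_0_compat; lra).
      intros k. rewrite Rabs_right.
      * apply Rmult_le_compat_l. apply Rmult_le_pos; [lra| left; apply Rinv_0_lt_compat; lra].
        apply le_INR. lia.
      * apply Rle_ge, Rmult_le_pos; [apply Rmult_le_pos; [lra| left; apply Rinv_0_lt_compat; lra]|apply pos_INR].
Qed.

Definition Vf (ps pg u : R) : R :=
  (ps * u * (u - 1) / 2 + u * pg + (1 - ps) * pg ^ 2 / ps) / ((1 - ps) * pg + ps * u).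

Definition avgf ps pg d := Vf ps pg (INR (Nat.max d 1)).

Lemma E_INR_bound ps pg d x0 t : 0 < ps < 1 -> 0 < pg < 1 ->
  0 <= E ps pg d x0 t INR <= INR x0 + INR (Nat.max d 1) + pg / ps.
Proof.
  intros Hs Hg. set (m := Nat.max d 1).
  assert (Hm : (d <= m)%nat) by lia.
  split.
  { rewrite <- (E_const ps pg d x0 t 0). apply E_mono; try lra. intros; apply pos_INR. }
  induction t as [|t IH].
  - rewrite E_0. assert (0 <= INR m) by apply pos_INR.
    assert (0 < pg / ps) by (apply Rdiv_lt_0_compat; lra). lra.
  - rewrite E_step.
    apply Rle_trans with (E ps pg d x0 t (fun k => (1 - ps) * INR k + (ps * INR m + pg) * (fun _ => 1) k)).
    + apply E_mono; try lra. intros k. unfold Pg. cbv beta.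
      destruct (Nat.ltb_spec k d) as [Hk|Hk].
      * rewrite S_INR. assert (INR k <= INR m) by (apply le_INR; lia). assert (ps * INR k <= ps * INR m) by (apply Rmult_le_compat_l; lra). lra.
      * rewrite (S_INR k). simpl (INR 0). simpl (INR 1). assert (0 <= INR m) by apply pos_INR. assert (0 <= ps * INR m) by (apply Rmult_le_pos; lra). match goal with |- ?a <= ?b => assert (b - a = ps * INR m) by ring end; lra.
    + rewrite E_lin, E_mass.
      assert (ps * (pg / ps) = pg) by (field; lra).
      assert (0 <= INR x0) by apply pos_INR.
      nra.
Qed.

Lemma avg_lim ps pg x0 d : 0 < ps < 1 -> 0 < pg < 1 ->
  is_lim_seq (cesaro (expAoI ps pg d x0)) (avgf ps pg d).
Proof.
  intros Hs Hg.
  apply is_lim_seq_ext with (u := cesaro (fun t => E ps pg d x0 t INR)).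
  { intros n. unfold cesaro. f_equal. apply sum_eq. intros t _. unfold E, expAoI.
    apply sum_eq. intros k _. ring. }
  set (m := Nat.max d 1).
  set (c := avgf ps pg d).
  assert (Hc : c = Vf ps pg (INR m)) by reflexivity.
  assert (Hm1 : (1 <= m)%nat) by lia.
  assert (Hdm : (d <= m)%nat) by lia.
  assert (HmR : 1 <= INR m) by (apply (le_INR 1); exact Hm1).
  assert (HD : 0 < (1 - ps) * pg + ps * INR m) by nra.
  set (q := fun j : nat => (INR j * c - INR j * (INR j - 1) / 2) / pg).
  set (h := fun j : nat => if Nat.leb j m then q j else INR j / ps + q m - INR m / ps).
  assert (Hlin : forall j, (m <= j)%nat -> h j = INR j / ps + q m - INR m / ps).
  { intros j Hj. unfold h. destruct (Nat.leb_spec j m) as [H|H].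
    - assert (j = m) by lia. subst j. field. lra.
    - reflexivity. }
  assert (Hq : forall j, (j <= m)%nat -> h j = q j).
  { intros j Hj. unfold h. replace (Nat.leb j m) with true by (symmetry; apply Nat.leb_le; lia). reflexivity. }
  set (Q := (INR m * Rabs c + INR m * INR m) / pg).
  set (Bd := INR x0 + INR m + pg / ps).
  apply (poisson _ _ _ _ _ h _ ((Q + INR m / ps) + / ps * Bd)).
  - intros j. unfold Pg.
    destruct (Nat.ltb_spec j d) as [Hj|Hj].
    + rewrite (Hq j) by lia. rewrite (Hq (S j)) by lia. unfold q. rewrite S_INR. field. lra.
    + destruct (Nat.le_gt_cases m j) as [Hmj|Hmj].
      * rewrite (Hlin j), (Hlin (S j)), (Hq 0%nat), (Hq 1%nat) by lia.
        unfold q. rewrite (S_INR j). simpl (INR 0). simpl (INR 1).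
        rewrite Hc. unfold Vf. field. repeat split; lra.
      * assert (j = 0%nat) by lia. subst j.
        rewrite (Hq 0%nat), (Hq 1%nat) by lia. unfold q. simpl (INR 0). simpl (INR 1). field. lra.
  - intros t.
    pose proof (E_INR_bound ps pg d x0 t Hs Hg) as HB. fold m Bd in HB.
    assert (Hbnd : forall k, Rabs (h k) <= (Q + INR m / ps) + / ps * INR k).
    { assert (Hqb : forall k, (k <= m)%nat -> Rabs (q k) <= Q).
      { intros k Hk. unfold q, Q. unfold Rdiv at 1 3. rewrite Rabs_mult, Rabs_inv, (Rabs_right pg) by lra.
        apply Rmult_le_compat_r. left; apply Rinv_0_lt_compat; lra.
        assert (Hx : 0 <= INR k) by apply pos_INR.
        assert (Hxy : INR k <= INR m) by (apply le_INR; exact Hk).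
        pose proof (Rle_abs c). pose proof (Rabs_pos c).
        assert (- Rabs c <= c) by (pose proof (Rle_abs (- c)); rewrite Rabs_Ropp in *; lra).
        apply Rabs_le. split; nra. }
      assert (Hips : 0 <= / ps) by (left; apply Rinv_0_lt_compat; lra).
      assert (Hk0 : forall k, 0 <= / ps * INR k) by (intros; apply Rmult_le_pos; [lra|apply pos_INR]).
      assert (Hm0 : 0 <= INR m / ps) by (apply Rmult_le_pos; [apply pos_INR|lra]).
      intros k. destruct (Nat.le_gt_cases k m) as [Hk|Hk].
      - rewrite (Hq k Hk). specialize (Hqb k Hk). specialize (Hk0 k). lra.
      - rewrite (Hlin k) by lia. specialize (Hqb m (le_n m)).
        apply Rabs_le_between in Hqb. apply Rabs_le.
        assert (INR k / ps = / ps * INR k) by (unfold Rdiv; ring).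
        specialize (Hk0 k). split; lra. }
    assert (Hips : 0 < / ps) by (apply Rinv_0_lt_compat; lra).
    apply Rabs_le. split.
    + apply Rle_trans with (E ps pg d x0 t (fun k => (- (Q + INR m / ps)) * (fun _ => 1) k + (- / ps) * INR k)).
      * rewrite E_lin, E_mass. nra.
      * apply E_mono; try lra. intros k. specialize (Hbnd k). apply Rabs_le_between in Hbnd. lra.
    + apply Rle_trans with (E ps pg d x0 t (fun k => ((Q + INR m / ps)) * (fun _ => 1) k + (/ ps) * INR k)).
      * apply E_mono; try lra. intros k. specialize (Hbnd k). apply Rabs_le_between in Hbnd. lra.
      * rewrite E_lin, E_mass. nra.
Qed.

Definition Dd ps pg u := (1 - ps) * pg + ps * u.
Definition Rr ps pg u := pg / Dd ps pg u.
Definition lam ps pg s := (Dd ps pg (s - 1) * Dd ps pg s - Dd ps pg 0 * Dd ps pg 1) / (2 * ps * pg).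
Definition Wf ps pg s u := Vf ps pg u + lam ps pg s * Rr ps pg u.

Lemma W_id ps pg s u : 0 < ps -> 0 < pg -> 0 < Dd ps pg u -> 0 < Dd ps pg s ->
  Wf ps pg s u - Wf ps pg s s = ps * (u - s) * (u - s + 1) / (2 * Dd ps pg u).
Proof. intros. unfold Wf, lam, Vf, Rr, Dd in *. field. repeat split; lra. Qed.

Lemma nat_prod a b : 0 <= (INR a - INR b) * (INR a - INR b + 1).
Proof.
  destruct (Nat.le_gt_cases b a) as [H|H].
  - apply le_INR in H. nra.
  - assert (INR (S a) <= INR b) by (apply le_INR; lia). rewrite S_INR in H0. nra.
Qed.

Lemma Rfun_S ps pg d : (1 <= d)%nat -> Rfun ps pg d = Rr ps pg (INR d).
Proof. intros H. destruct d as [|n]. lia. unfold Rfun, Rr, Dd. f_equal. ring. Qed.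

Lemma avgf_S ps pg d : (1 <= d)%nat -> avgf ps pg d = Vf ps pg (INR d).
Proof. intros H. unfold avgf. f_equal. f_equal. lia. Qed.

Lemma Dd_pos ps pg u : 0 < ps < 1 -> 0 < pg < 1 -> 0 <= u -> 0 < Dd ps pg u.
Proof. intros. unfold Dd. nra. Qed.

Lemma W_ge ps pg ds d : 0 < ps < 1 -> 0 < pg < 1 -> (1 <= ds)%nat ->
  Wf ps pg (INR ds) (INR ds) <= avgf ps pg d + lam ps pg (INR ds) * Rfun ps pg d.
Proof.
  intros Hs Hg Hds.
  set (s := INR ds).
  assert (Hs1 : 1 <= s) by (apply (le_INR 1); exact Hds).
  assert (Hlam : 0 <= lam ps pg s).
  { unfold lam. apply Rmult_le_pos; [|left; apply Rinv_0_lt_compat; nra].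
    assert (0 < Dd ps pg 0) by (apply Dd_pos; lra).
    assert (Dd ps pg 0 <= Dd ps pg (s-1)) by (unfold Dd; nra).
    assert (Dd ps pg 1 <= Dd ps pg s) by (unfold Dd; nra).
    assert (0 < Dd ps pg 1) by (apply Dd_pos; lra).
    nra. }
  assert (Hgen : forall d, (1 <= d)%nat -> Wf ps pg s s <= Wf ps pg s (INR d)).
  { intros d' Hd'.
    assert (HDu : 0 < Dd ps pg (INR d')) by (apply Dd_pos; auto; apply pos_INR).
    assert (HDs : 0 < Dd ps pg s) by (apply Dd_pos; lra).
    pose proof (W_id ps pg s (INR d') ltac:(lra) ltac:(lra) HDu HDs).
    assert (0 <= ps * (INR d' - s) * (INR d' - s + 1) / (2 * Dd ps pg (INR d'))).
    { unfold Rdiv. apply Rmult_le_pos; [|left; apply Rinv_0_lt_compat; lra].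
      rewrite Rmult_assoc. apply Rmult_le_pos; [lra|]. apply nat_prod. }
    lra. }
  destruct d as [|n].
  - unfold avgf. simpl (Nat.max 0 1). unfold Rfun.
    pose proof (Hgen 1%nat (le_n 1)). unfold Wf in H. simpl (INR 1) in H.
    assert (Rr ps pg 1 <= 1).
    { unfold Rr. assert (0 < Dd ps pg 1) by (apply Dd_pos; lra).
      apply Rmult_le_reg_r with (Dd ps pg 1); auto. unfold Rdiv. rewrite Rmult_assoc, Rinv_l by lra.
      unfold Dd. nra. }
    simpl (INR 1). unfold Wf in *. assert (0 <= lam ps pg s * (1 - Rr ps pg 1)) by (apply Rmult_le_pos; lra). lra.
  - rewrite Rfun_S, avgf_S by lia. apply Hgen. lia.
Qed.

Lemma opt ps pg alpha ds : 0 < ps < 1 -> 0 < pg < 1 -> 0 < alpha <= 1 -> (1 <= ds)%nat ->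
  pg / ps * (1 / alpha - 1 + ps) <= INR ds < pg / ps * (1 / alpha - 1 + ps) + 1 ->
  let R1 := Rfun ps pg ds in let R0 := Rfun ps pg (ds - 1) in
  let gamma := (R0 - alpha) / (R0 - R1) in
  0 <= gamma <= 1 /\ gamma * R1 + (1 - gamma) * R0 <= alpha /\
  (forall d1 d2 g, 0 <= g <= 1 -> g * Rfun ps pg d1 + (1 - g) * Rfun ps pg d2 <= alpha ->
     gamma * avgf ps pg ds + (1 - gamma) * avgf ps pg (ds - 1) <= g * avgf ps pg d1 + (1 - g) * avgf ps pg d2).
Proof.
  intros Hs Hg Ha Hds Hx R1 R0 gamma.
  set (s := INR ds) in *.
  set (x := pg / ps * (1 / alpha - 1 + ps)) in *.
  assert (Hs1 : 1 <= s) by (apply (le_INR 1); exact Hds).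
  assert (Hpx : ps * x = pg - pg * alpha * / alpha + pg * / alpha * 1 * 1 - pg + pg * ps) by (unfold x; field; lra).
  assert (Hpx' : ps * x * alpha = pg - alpha * pg + alpha * ps * pg).
  { unfold x. field. lra. }
  assert (HaD : forall u, x <= u -> pg <= alpha * Dd ps pg u).
  { intros u Hu. unfold Dd. assert (ps * x * alpha <= ps * u * alpha).
    { apply Rmult_le_compat_r; [lra|]. apply Rmult_le_compat_l; lra. }
    nra. }
  assert (HaD' : forall u, u < x -> alpha * Dd ps pg u < pg).
  { intros u Hu. unfold Dd. assert (ps * u * alpha < ps * x * alpha).
    { apply Rmult_lt_compat_r; [lra|]. apply Rmult_lt_compat_l; lra. }
    nra. }
  assert (HR1 : R1 = Rr ps pg s) by (unfold R1; apply Rfun_S; exact Hds).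
  assert (HDs : 0 < Dd ps pg s) by (apply Dd_pos; lra).
  assert (HR1a : R1 <= alpha).
  { rewrite HR1. unfold Rr. apply Rmult_le_reg_r with (Dd ps pg s); auto.
    unfold Rdiv. rewrite Rmult_assoc, Rinv_l by lra. specialize (HaD s (proj1 Hx)). lra. }
  assert (HR0 : alpha <= R0 /\ R1 < R0).
  { destruct (Nat.eq_dec ds 1) as [E1|E1].
    - subst ds. unfold R0. simpl (1 - 1)%nat. unfold Rfun at 1. split; [lra|].
      rewrite HR1. unfold s. simpl (INR 1). unfold Rr.
      assert (0 < Dd ps pg 1) by (apply Dd_pos; lra).
      apply Rmult_lt_reg_r with (Dd ps pg 1); auto. unfold Rdiv. rewrite Rmult_assoc, Rinv_l by lra.
      unfold Dd, Rfun. nra.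
    - assert (Hm : INR (ds - 1) = s - 1) by (unfold s; rewrite minus_INR by lia; reflexivity).
      assert (HR0 : R0 = Rr ps pg (s - 1)) by (unfold R0; rewrite Rfun_S by lia; rewrite Hm; reflexivity).
      assert (Hs2 : 2 <= s) by (apply (le_INR 2); lia).
      assert (HD0 : 0 < Dd ps pg (s - 1)) by (apply Dd_pos; lra).
      assert (alpha < R0).
      { rewrite HR0. unfold Rr. apply Rmult_lt_reg_r with (Dd ps pg (s - 1)); auto.
        unfold Rdiv. rewrite Rmult_assoc, Rinv_l by lra. specialize (HaD' (s - 1) ltac:(lra)). lra. }
      lra. }
  destruct HR0 as [HR0a HR01].
  assert (Hgam : 0 <= gamma <= 1).
  { unfold gamma. split.
    - apply Rmult_le_pos; [lra|left; apply Rinv_0_lt_compat; lra].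
    - apply Rmult_le_reg_r with (R0 - R1); [lra|]. unfold Rdiv. rewrite Rmult_assoc, Rinv_l by lra. lra. }
  assert (Hmix : gamma * R1 + (1 - gamma) * R0 = alpha).
  { unfold gamma. field. lra. }
  split; [exact Hgam|]. split; [lra|].
  intros d1 d2 g Hg01 Hmix2.
  set (L := lam ps pg s).
  set (W := Wf ps pg s s).
  pose proof (W_ge ps pg ds d1 Hs Hg Hds) as H1.
  pose proof (W_ge ps pg ds d2 Hs Hg Hds) as H2.
  fold s L W in H1, H2.
  assert (HL : 0 <= L).
  { unfold L, lam. apply Rmult_le_pos; [|left; apply Rinv_0_lt_compat; nra].
    assert (0 < Dd ps pg 0) by (apply Dd_pos; lra).
    assert (Dd ps pg 0 <= Dd ps pg (s-1)) by (unfold Dd; nra).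
    assert (Dd ps pg 1 <= Dd ps pg s) by (unfold Dd; nra).
    assert (0 < Dd ps pg 1) by (apply Dd_pos; lra).
    nra. }
  assert (E1 : avgf ps pg ds + L * R1 = W).
  { unfold W, Wf, L. rewrite HR1, avgf_S by exact Hds. reflexivity. }
  assert (E0 : avgf ps pg (ds - 1) + L * R0 = W).
  { destruct (Nat.eq_dec ds 1) as [Q1|Q1].
    - assert (Hs1' : s = 1) by (unfold s; rewrite Q1; reflexivity).
      unfold R0, W, Wf, L. rewrite Q1. simpl (1 - 1)%nat. unfold Rfun at 1.
      unfold avgf. simpl (Nat.max 0 1). rewrite Hs1'.
      assert (lam ps pg 1 = 0) by (unfold lam; replace (1 - 1) with 0 by ring; field; lra).
      rewrite H. simpl (INR 1). ring.
    - assert (Hm : INR (ds - 1) = s - 1) by (unfold s; rewrite minus_INR by lia; reflexivity).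
      unfold R0. rewrite Rfun_S, avgf_S by lia. rewrite Hm.
      assert (HD0 : 0 < Dd ps pg (s - 1)).
      { apply Dd_pos; lra. }
      pose proof (W_id ps pg s (s - 1) ltac:(lra) ltac:(lra) HD0 HDs).
      unfold Wf in H. unfold W, Wf, L.
      replace (ps * (s - 1 - s) * (s - 1 - s + 1) / (2 * Dd ps pg (s - 1))) with 0 in H by (field; lra).
      lra. }
  assert (0 <= g * (avgf ps pg d1 + L * Rfun ps pg d1 - W)) by (apply Rmult_le_pos; lra).
  assert (0 <= (1 - g) * (avgf ps pg d2 + L * Rfun ps pg d2 - W)) by (apply Rmult_le_pos; lra).
  assert (0 <= L * (alpha - (g * Rfun ps pg d1 + (1 - g) * Rfun ps pg d2))) by (apply Rmult_le_pos; lra).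
  assert (gamma * avgf ps pg ds + (1 - gamma) * avgf ps pg (ds - 1) = W - L * alpha).
  { rewrite <- Hmix. replace (avgf ps pg ds) with (W - L * R1) by lra.
    replace (avgf ps pg (ds - 1)) with (W - L * R0) by lra. ring. }
  nra.
Qed.

Lemma Rceil_spec x : IZR (Rceil x) >= x /\ IZR (Rceil x) < x + 1.
Proof.
  unfold Rceil. destruct (archimed (- x)) as [H1 H2].
  rewrite opp_IZR, minus_IZR. simpl (IZR 1). lra.
Qed.

Theorem theorem1 (ps pg alpha : R) (x0 : nat) :
  0 < ps < 1 -> 0 < pg < 1 -> 0 < alpha <= 1 ->
  let beta := 1 - (1 - ps) * (1 - pg) in
  let Rf := fun d : nat => match d with
                           | O => 1
                           | S _ => pg / ((INR d - 1) * ps + beta)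
                           end in
  let dstar := Z.to_nat (Rceil (pg / ps * (1 / alpha - 1 + ps))) in
  let gamma := (Rf (dstar - 1)%nat - alpha) / (Rf (dstar - 1)%nat - Rf dstar) in
  exists (rate avg : nat -> R),
    (forall d, is_lim_seq (cesaro (expAct ps pg d x0)) (rate d)) /\
    (forall d, is_lim_seq (cesaro (expAoI ps pg d x0)) (avg d)) /\
    (forall d, rate d = Rf d) /\
    0 <= gamma <= 1 /\
    gamma * rate dstar + (1 - gamma) * rate (dstar - 1)%nat <= alpha /\
    (forall (d1 d2 : nat) (g : R), 0 <= g <= 1 ->
       g * rate d1 + (1 - g) * rate d2 <= alpha ->
       gamma * avg dstar + (1 - gamma) * avg (dstar - 1)%nat
         <= g * avg d1 + (1 - g) * avg d2).
Proof.
  intros Hs Hg Ha beta Rf dstar gamma.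
  assert (HRf : forall d, Rf d = Rfun ps pg d) by (intros [|n]; reflexivity).
  set (x := pg / ps * (1 / alpha - 1 + ps)) in *.
  assert (Hx0 : 0 < x).
  { unfold x. apply Rmult_lt_0_compat. apply Rdiv_lt_0_compat; lra.
    assert (1 <= 1 / alpha).
    { apply Rmult_le_reg_r with alpha; [lra|]. unfold Rdiv. rewrite Rmult_assoc, Rinv_l by lra. lra. }
    lra. }
  destruct (Rceil_spec x) as [Hc1 Hc2].
  assert (Hpos : (0 < Rceil x)%Z) by (apply lt_0_IZR; lra).
  assert (Hds : INR dstar = IZR (Rceil x)).
  { unfold dstar. rewrite INR_IZR_INZ, Z2Nat.id by lia. reflexivity. }
  assert (Hds1 : (1 <= dstar)%nat).
  { destruct dstar. simpl in Hds. lra. lia. }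
  destruct (opt ps pg alpha dstar Hs Hg Ha Hds1 ltac:(rewrite Hds; fold x; lra)) as [G1 [G2 G3]].
  exists (Rfun ps pg), (avgf ps pg).
  split; [intros d; apply rate_lim; auto|].
  split; [intros d; apply avg_lim; auto|].
  split; [intros d; symmetry; apply HRf|].
  unfold gamma. rewrite !HRf.
  split; [exact G1|]. split; [exact G2|]. exact G3.
Qed.
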